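(* Let $A$ be a real $N\times N$ matrix, $B$ a real $N\times m$ matrix and $K$ a real $m\times N$ matrix, and set $A_1=-BK$. Suppose there exist symmetric $N\times N$ matrices $P>0$ and $Q>0$ such that $(A+A_1)^\top P+P(A+A_1)=-Q$, so that $V(x)=x^\top P x$ is a Lyapunov function for the continuous closed-loop system $\dot x(t)=(A+A_1)x(t)$, with $\dot V(x)=-x^\top Q x<0$ for $x\neq 0$. Then there is a constant $c'>0$ such that, for every hold length $$\Delta\le c'\,\frac{\sigma_{\min}(Q)}{\sigma_{\max}(P)\,\big(\sigma_{\max}(A)+\sigma_{\max}(A_1)\big)^2},$$ the sampled-data (piecewise-constant control) system $$\dot x(t)=Ax(t)+A_1x(t_k),\qquad t\in[t_k,t_{k+1}),\ k=0,1,\dots,$$ with sampling instants satisfying $t_{k+1}-t_k\le\Delta$, is asymptotically stable.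
   Context: $\sigma_{\min}(\cdot)$ and $\sigma_{\max}(\cdot)$ denote the minimum and maximum singular values of a matrix. The sampling instants $0=t_0<t_1<t_2<\cdots$ are such that the control $A_1x(t_k)$ is held constant on each holding period $[t_k,t_{k+1})$ (zero-order hold). $x(t)$ is the error state relative to the equilibrium $0$. *)

(* Defs.v *)
From HB Require Import structures.
From mathcomp Require Import all_boot all_order all_algebra.
From mathcomp Require Import all_classical all_reals all_analysis.
Set Implicit Arguments. Unset Strict Implicit. Unset Printing Implicit Defensive.
Import Order.TTheory GRing.Theory Num.Theory.
Import numFieldNormedType.Exports.
Local Open Scope classical_set_scope.
Local Open Scope ring_scope.

Section Defs.
Variable R : realType.

Definition vnorm (n : nat) (v : 'cV[R]_n) : R :=
  Num.sqrt (\sum_(i < n) v i ord0 ^+ 2).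

Definition posdef (n : nat) (P : 'M[R]_n) : Prop :=
  P^T = P /\ forall x : 'cV[R]_n, x != 0 -> 0 < (x^T *m P *m x) ord0 ord0.

Definition singvals (p q : nat) (M : 'M[R]_(p, q)) : set R :=
  [set s | 0 <= s /\ eigenvalue (M^T *m M) (s ^+ 2)].

Definition smax (p q : nat) (M : 'M[R]_(p, q)) : R := sup (singvals M).
Definition smin (n : nat) (M : 'M[R]_n) : R := inf (singvals M).

Definition sampling (t : nat -> R) (Delta : R) : Prop :=
  [/\ t 0%N = 0,
      forall k, t k < t k.+1,
      forall k, t k.+1 - t k <= Delta
    & forall T, exists k, T <= t k].

Definition sd_solution (N : nat) (A A1 : 'M[R]_N) (t : nat -> R)
    (x : R -> 'cV[R]_N) : Prop :=
  (forall i : 'I_N, {within [set s : R | 0 <= s], continuous (fun s => x s i ord0)})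
  /\ forall (k : nat) (s : R), t k < s < t k.+1 -> forall i : 'I_N,
       is_derive s 1 (fun u => x u i ord0) ((A *m x s + A1 *m x (t k)) i ord0).

Definition asymp_stable (N : nat) (A A1 : 'M[R]_N) (t : nat -> R) : Prop :=
  (forall eps : R, 0 < eps -> exists2 delta : R, 0 < delta &
     forall x, sd_solution A A1 t x -> vnorm (x 0) < delta ->
       forall s, 0 <= s -> vnorm (x s) < eps)
  /\ exists2 delta : R, 0 < delta &
     forall x, sd_solution A A1 t x -> vnorm (x 0) < delta ->
       vnorm (x s) @[s --> +oo] --> 0.
End Defs.

(* Main.v *)
Require Import Defs.
From HB Require Import structures.
From mathcomp Require Import all_boot all_order all_algebra.
From mathcomp Require Import all_classical all_reals all_analysis.
From mathcomp Require Import ring lra.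
Set Implicit Arguments. Unset Strict Implicit. Unset Printing Implicit Defensive.
Import Order.TTheory GRing.Theory Num.Theory.
Import numFieldNormedType.Exports.
Local Open Scope classical_set_scope.
Local Open Scope ring_scope.

Definition dotv (R : realType) n (u v : 'cV[R]_n) : R := (u^T *m v) ord0 ord0.
Definition qf (R : realType) n (u : 'cV[R]_n) (M : 'M[R]_n) (v : 'cV[R]_n) : R :=
  (u^T *m M *m v) ord0 ord0.

Lemma dotvE (R : realType) n (u v : 'cV[R]_n) :
  dotv u v = \sum_i u i ord0 * v i ord0.
Proof. by rewrite /dotv mxE; apply: eq_bigr => i _; rewrite mxE. Qed.

Lemma qfE (R : realType) n (u : 'cV[R]_n) M v :
  qf u M v = \sum_j (\sum_i u i ord0 * M i j) * v j ord0.
Proof.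
rewrite /qf mxE; apply: eq_bigr => j _; rewrite mxE; congr (_ * _).
by apply: eq_bigr => i _; rewrite mxE.
Qed.

Lemma qf1 (R : realType) n (u v : 'cV[R]_n) : qf u 1%:M v = dotv u v.
Proof. by rewrite /qf mulmx1. Qed.

Lemma dotvC (R : realType) n (u v : 'cV[R]_n) : dotv u v = dotv v u.
Proof. by rewrite !dotvE; apply: eq_bigr => i _; rewrite mulrC. Qed.

Lemma dotv_ge0 (R : realType) n (u : 'cV[R]_n) : 0 <= dotv u u.
Proof. by rewrite dotvE; apply: sumr_ge0 => i _; rewrite -expr2 sqr_ge0. Qed.

Lemma dotv_eq0 (R : realType) n (u : 'cV[R]_n) : dotv u u = 0 -> u = 0.
Proof.
rewrite dotvE => /eqP; rewrite psumr_eq0; last by move=> i _; rewrite -expr2 sqr_ge0.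
move=> /allP H; apply/matrixP => i j; rewrite (ord1 j) mxE.
by have := H i (mem_index_enum i) => /=; rewrite mulf_eq0 orbb => /eqP.
Qed.

Lemma dotv_gt0 (R : realType) n (u : 'cV[R]_n) : u != 0 -> 0 < dotv u u.
Proof.
move=> u0; rewrite lt_neqAle dotv_ge0 andbT eq_sym; apply/eqP => /dotv_eq0 h.
by rewrite h eqxx in u0.
Qed.

Lemma vnormE (R : realType) n (u : 'cV[R]_n) : vnorm u = Num.sqrt (dotv u u).
Proof. by rewrite /vnorm dotvE; congr Num.sqrt; apply: eq_bigr => i _; rewrite expr2. Qed.

Lemma vnorm_ge0 (R : realType) n (u : 'cV[R]_n) : 0 <= vnorm u.
Proof. by rewrite vnormE sqrtr_ge0. Qed.

Lemma vnorm_sq (R : realType) n (u : 'cV[R]_n) : vnorm u ^+ 2 = dotv u u.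
Proof. by rewrite vnormE sqr_sqrtr // dotv_ge0. Qed.

Lemma qf_tr (R : realType) n (u : 'cV[R]_n) M v : M^T = M -> qf u M v = qf v M u.
Proof.
move=> sM; rewrite /qf; transitivity ((u^T *m M *m v)^T ord0 ord0); first by rewrite [RHS]mxE.
by rewrite !trmx_mul trmxK sM mulmxA.
Qed.

Lemma qfDl (R : realType) n (u1 u2 : 'cV[R]_n) M v :
  qf (u1 + u2) M v = qf u1 M v + qf u2 M v.
Proof. by rewrite /qf linearD /= !mulmxDl mxE. Qed.

Lemma qfDr (R : realType) n (u : 'cV[R]_n) M v1 v2 :
  qf u M (v1 + v2) = qf u M v1 + qf u M v2.
Proof. by rewrite /qf mulmxDr mxE. Qed.

Lemma qfZl (R : realType) n (u : 'cV[R]_n) M v a :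
  qf (a *: u) M v = a * qf u M v.
Proof. by rewrite /qf linearZ /= -!scalemxAl mxE. Qed.

Lemma qfZr (R : realType) n (u : 'cV[R]_n) M v a :
  qf u M (a *: v) = a * qf u M v.
Proof. by rewrite /qf -scalemxAr mxE. Qed.

Lemma qfNl (R : realType) n (u : 'cV[R]_n) M v : qf (- u) M v = - qf u M v.
Proof. by rewrite -scaleN1r qfZl mulN1r. Qed.

Lemma qfNr (R : realType) n (u : 'cV[R]_n) M v : qf u M (- v) = - qf u M v.
Proof. by rewrite -scaleN1r qfZr mulN1r. Qed.

Lemma qf_mul (R : realType) n (u : 'cV[R]_n) M v : qf u M v = dotv u (M *m v).
Proof. by rewrite /qf /dotv mulmxA. Qed.

Lemma qf_mulM (R : realType) n (u : 'cV[R]_n) (M : 'M[R]_n) v : qf u (M^T *m M) v = dotv (M *m u) (M *m v).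
Proof. by rewrite /qf /dotv trmx_mul !mulmxA. Qed.

Lemma psd_cs (R : realType) n (M : 'M[R]_n) : M^T = M ->
  (forall z, 0 <= qf z M z) ->
  forall x y, qf x M y ^+ 2 <= qf x M x * qf y M y.
Proof.
move=> sM psd x y.
set a := qf x M x; set b := qf x M y; set c := qf y M y.
have E t : qf (x + t *: y) M (x + t *: y) = a + 2 * t * b + t ^+ 2 * c.
  rewrite qfDl !qfDr !qfZl !qfZr (@qf_tr _ _ y M x sM) -/a -/b -/c; lra.
have c0 : 0 <= c by apply: psd.
have a0 : 0 <= a by apply: psd.
case: (ltrP 0 c) => [cpos|cle0].
  have := psd (x + (- b / c) *: y); rewrite E => h.
  have e : a + 2 * (- b / c) * b + (- b / c) ^+ 2 * c = a - b ^+ 2 / c.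
    by field; rewrite gt_eqF.
  rewrite e subr_ge0 ler_pdivrMr // in h; lra.
have c00 : c = 0 by apply/eqP; rewrite eq_le cle0 c0.
have b0 : b = 0.
  apply/eqP/negPn/negP => bn0.
  have := psd (x + (- (a + 1) / (2 * b)) *: y); rewrite E c00.
  have -> : a + 2 * (- (a + 1) / (2 * b)) * b + (- (a + 1) / (2 * b)) ^+ 2 * 0 = -1.
    by field.
  lra.
by rewrite b0 c00 expr0n /= mulr0.
Qed.

Lemma cs_dotv (R : realType) n (x y : 'cV[R]_n) :
  `|dotv x y| <= vnorm x * vnorm y.
Proof.
have h := @psd_cs R n 1%:M (trmx1 _ _) (fun z => ltac:(rewrite qf1; exact: dotv_ge0)) x y.
rewrite !qf1 in h.
rewrite -(ger0_norm (mulr_ge0 (vnorm_ge0 x) (vnorm_ge0 y))).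
rewrite -ler_sqr ?nnegrE ?normr_ge0 //.
by rewrite real_normK ?num_real // ger0_norm ?mulr_ge0 ?vnorm_ge0 // exprMn !vnorm_sq.
Qed.

Lemma cvg_sumR (R : realType) (T : Type) (F : set_system T) {FF : Filter F}
  (I : Type) (r : seq I) (P : pred I) (f : I -> T -> R) (l : I -> R) :
  (forall i, f i x @[x --> F] --> l i) ->
  \sum_(i <- r | P i) f i x @[x --> F] --> \sum_(i <- r | P i) l i.
Proof.
move=> h; elim: r => [|i r IH].
  under eq_cvg do rewrite big_nil.
  by rewrite big_nil; exact: cvg_cst.
under eq_cvg do rewrite big_cons.
rewrite big_cons; case: (P i) => //.
exact: cvgD.
Qed.

Lemma qf_rV_continuous (R : realType) n (M : 'M[R]_n) :
  continuous (fun w : 'rV[R]_n => qf w^T M w^T).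
Proof.
have -> : (fun w : 'rV[R]_n => qf w^T M w^T) =
    (fun w => \sum_j (\sum_i w ord0 i * M i j) * w ord0 j).
  apply: funext => w; rewrite qfE; apply: eq_bigr => j _; rewrite mxE.
  by congr (_ * _); apply: eq_bigr => i _; rewrite mxE.
move=> w; apply: (@cvg_sumR R _ (nbhs w)) => j; apply: cvgM; last exact: coord_continuous.
apply: (@cvg_sumR R _ (nbhs w)) => i; apply: cvgM; last exact: cvg_cst.
exact: coord_continuous.
Qed.

Lemma qf0l (R : realType) n (M : 'M[R]_n) v : qf 0 M v = 0.
Proof. by rewrite /qf trmx0 !mul0mx mxE. Qed.

Lemma dotv0 (R : realType) n : dotv (0 : 'cV[R]_n) 0 = 0.
Proof. by rewrite /dotv trmx0 mul0mx mxE. Qed.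

Lemma qf_shift (R : realType) n (u : 'cV[R]_n) S v a :
  qf u (a%:M - S) v = a * dotv u v - qf u S v.
Proof.
rewrite /qf /dotv mulmxBr mul_mx_scalar mulmxBl -scalemxAl mxE.
by rewrite !mxE.
Qed.

Lemma sym_max (R : realType) n (S : 'M[R]_n) : (0 < n)%N -> S^T = S ->
  exists l : R, exists2 v : 'cV[R]_n, v != 0 &
    S *m v = l *: v /\ (forall x, qf x S x <= l * dotv x x).
Proof.
move=> n0 sS.
pose A := [set w : 'rV[R]_n | qf w^T 1%:M w^T = 1].
have A0 : A !=set0.
  pose i0 := Ordinal n0; exists (\row_j (j == i0)%:R : 'rV[R]_n).
  rewrite /A /= qf1 dotvE (bigD1 i0) //= big1 ?addr0.
    by rewrite !mxE eqxx mulr1.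
  by move=> i /negbTE hi; rewrite !mxE hi mulr0.
have cA : compact A.
  apply: bounded_closed_compact.
    rewrite /bounded_near; apply: filterS (nbhs_pinfty_ge (num_real (1 : R))).
    move=> M M1 w Aw /=; apply: le_trans M1.
    rewrite -[`|w|]/(mx_norm w) mx_normrE; apply: bigmax_le => // ij _.
    have -> : ij.1 = ord0 by apply: ord1.
    rewrite -(@expr_le1 _ 2) // real_normK ?num_real //.
    move: Aw; rewrite /A /= qf1 dotvE (bigD1 ij.2) //= !mxE -expr2 => <-.
    rewrite lerDl; apply: sumr_ge0 => i _; rewrite !mxE -expr2 sqr_ge0 //.
  have gc := @qf_rV_continuous R n 1%:M.
  have := (continuous_closedP _).1 gc [set x | x = 1] (@closed_eq R 1).
  exact.
have fc := @qf_rV_continuous R n S.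
have [c Ac cmax] := compact_EVT_max A0 cA (@continuous_subspaceT _ _ A _ fc).
set l := qf c^T S c^T; set v := c^T.
have Ac' : dotv v v = 1 by move: Ac; rewrite inE /A /= qf1.
have ub : forall x, qf x S x <= l * dotv x x.
  move=> x; have [->|x0] := eqVneq x 0; first by rewrite qf0l dotv0 mulr0.
  have d0 := dotv_gt0 x0; set d := dotv x x in d0 *.
  set s := Num.sqrt d; have s0 : 0 < s by rewrite sqrtr_gt0.
  have ss : s ^+ 2 = d by rewrite sqr_sqrtr // ltW.
  have wA : (s^-1 *: x)^T \in A.
    rewrite inE /A /= trmxK qfZl qfZr qf1 -/d -ss; field; by rewrite gt_eqF.
  have := cmax _ wA; rewrite /= trmxK qfZl qfZr -/l => h.
  have -> : qf x S x = s ^+ 2 * (s^-1 * (s^-1 * qf x S x)) by field; rewrite gt_eqF.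
  rewrite -ss mulrC ler_wpM2r // ?sqr_ge0 //.
have eig : S *m v = l *: v.
  pose M := l%:M - S.
  have sM : M^T = M by rewrite /M linearB /= tr_scalar_mx sS.
  have psd : forall z, 0 <= qf z M z by move=> z; rewrite qf_shift subr_ge0 ub.
  have Mv0 : qf v M v = 0 by rewrite qf_shift Ac' mulr1 subrr.
  have h0 : forall y, qf y M v = 0.
    move=> y; have := psd_cs sM psd y v; rewrite Mv0 mulr0 => h.
    by apply/eqP; rewrite -sqrf_eq0 eq_le h sqr_ge0.
  have := h0 (M *m v); rewrite qf_mul => /dotv_eq0.
  by rewrite /M mulmxBl mul_scalar_mx => /eqP; rewrite subr_eq0 => /eqP <-.
exists l; exists v => //.
by apply/eqP => v0; move: Ac'; rewrite v0 dotv0 => /eqP; rewrite eq_sym oner_eq0.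
Qed.

Lemma qfNM (R : realType) n (u : 'cV[R]_n) (M : 'M[R]_n) v : qf u (- M) v = - qf u M v.
Proof. by rewrite /qf mulmxN mulNmx mxE. Qed.

Lemma sym_min (R : realType) n (S : 'M[R]_n) : (0 < n)%N -> S^T = S ->
  exists l : R, exists2 v : 'cV[R]_n, v != 0 &
    S *m v = l *: v /\ (forall x, l * dotv x x <= qf x S x).
Proof.
move=> n0 sS; have sS' : (- S)^T = - S by rewrite linearN /= sS.
have [l [v v0 [ev ub]]] := sym_max n0 sS'.
exists (- l); exists v => //; split.
  by rewrite -[S]opprK mulNmx ev scaleNr.
by move=> x; have := ub x; rewrite qfNM mulNr lerNl.
Qed.

Lemma eig_tr (R : realType) n (S : 'M[R]_n) (v : 'cV[R]_n) a :
  S^T = S -> S *m v = a *: v -> v^T *m S = a *: v^T.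
Proof.
move=> sS ev; rewrite -{1}sS -trmx_mul ev.
by rewrite linearZ.
Qed.

Lemma eig_tr' (R : realType) n (S : 'M[R]_n) (w : 'rV[R]_n) a :
  S^T = S -> w *m S = a *: w -> S *m w^T = a *: w^T.
Proof.
move=> sS ev; rewrite -{1}sS -trmx_mul ev.
by rewrite linearZ.
Qed.

Lemma smax_prop (R : realType) n (M : 'M[R]_n) : (0 < n)%N ->
  0 <= smax M /\ forall x, vnorm (M *m x) <= smax M * vnorm x.
Proof.
move=> n0; set S := M^T *m M.
have sS : S^T = S by rewrite /S trmx_mul trmxK.
have [l [v v0 [ev ub]]] := sym_max n0 sS.
have l0 : 0 <= l.
  have := dotv_ge0 (M *m v); rewrite -qf_mulM -/S qf_mul ev.
  by rewrite /dotv -scalemxAr mxE -/(dotv v v) pmulr_lge0 // dotv_gt0.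
set s := Num.sqrt l.
have s2 : s ^+ 2 = l by rewrite sqr_sqrtr.
have inS : singvals M s.
  split; first exact: sqrtr_ge0.
  apply/eigenvalueP; exists v^T; first by rewrite s2; exact: eig_tr.
  by rewrite trmx_eq0.
have ubS : ubound (singvals M) s.
  move=> r [r0 /eigenvalueP [w ew w0]].
  have ew' := eig_tr' sS ew.
  have u0 : w^T != 0 by rewrite trmx_eq0.
  have := ub w^T; rewrite qf_mul ew' /dotv -scalemxAr mxE -/(dotv w^T w^T).
  rewrite ler_pM2r ?dotv_gt0 // => h.
  by rewrite -(ger0_norm r0) -sqrtr_sqr ler_wsqrtr.
have sm : smax M = s.
  apply/eqP; rewrite eq_le; apply/andP; split.
    by apply: ge_sup => //; exists s.
  by apply: sup_upper_bound => //; split; [exists s | exists s].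
rewrite sm; split; first exact: sqrtr_ge0.
move=> x; rewrite -ler_sqr ?nnegrE ?mulr_ge0 ?vnorm_ge0 ?sqrtr_ge0 //.
by rewrite exprMn s2 !vnorm_sq -qf_mulM ub.
Qed.

Lemma smin_prop (R : realType) n (Q : 'M[R]_n) : (0 < n)%N -> posdef Q ->
  exists q : R, [/\ 0 < q, smin Q <= q & forall x, q * dotv x x <= qf x Q x].
Proof.
move=> n0 [sQ pQ].
have [l [v v0 [ev lb]]] := sym_min n0 sQ.
have l0 : 0 < l.
  have := pQ v v0; rewrite -/(qf v Q v) qf_mul ev.
  by rewrite /dotv -scalemxAr mxE -/(dotv v v) pmulr_lgt0 // dotv_gt0.
exists l; split => //.
have inS : singvals Q l.
  split; first exact: ltW.
  apply/eigenvalueP; exists v^T; last by rewrite trmx_eq0.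
  have sS : (Q^T *m Q)^T = Q^T *m Q by rewrite trmx_mul trmxK.
  apply: eig_tr => //.
  by rewrite sQ -mulmxA ev -scalemxAr ev scalerA expr2.
apply: ge_inf => //; exists 0 => r [] //.
Qed.

Lemma is_derive_sumR (R : realType) (I : Type) (r : seq I) (f : I -> R -> R)
  (df : I -> R) (s : R) :
  (forall i, is_derive s 1 (f i) (df i)) ->
  is_derive s 1 (fun u => \sum_(i <- r) f i u) (\sum_(i <- r) df i).
Proof.
move=> h; elim: r => [|i r IH].
  have -> : (fun u => \sum_(i <- [::]) f i u) = cst 0.
    by apply: funext => u; rewrite big_nil.
  by rewrite big_nil; exact: is_derive_cst.
have -> : (fun u => \sum_(j <- i :: r) f j u) = f i + (fun u => \sum_(j <- r) f j u).
  by apply: funext => u; rewrite big_cons.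
by rewrite big_cons; exact: is_deriveD.
Qed.

Lemma is_deriveMR (R : realType) (f g : R -> R) (s : R) (df dg : R) :
  is_derive s 1 f df -> is_derive s 1 g dg ->
  is_derive s 1 (fun u => f u * g u) (df * g s + f s * dg).
Proof.
move=> hf hg; have := is_deriveM hf hg.
have -> : (f * g) = (fun u => f u * g u) by [].
by rewrite addrC /GRing.scale /= mulrC.
Qed.

Definition hasD (R : realType) n (x : R -> 'cV[R]_n) (s : R) (dx : 'cV[R]_n) :=
  forall i, is_derive s 1 (fun u => x u i ord0) (dx i ord0).

Definition hasC (R : realType) n (x : R -> 'cV[R]_n) (D : set R) :=
  forall i, {within D, continuous (fun u => x u i ord0)}.

Lemma qf_derive (R : realType) n (M : 'M[R]_n) (x y : R -> 'cV[R]_n) (s : R) dx dy :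
  hasD x s dx -> hasD y s dy ->
  is_derive s 1 (fun u => qf (x u) M (y u)) (qf dx M (y s) + qf (x s) M dy).
Proof.
move=> hx hy.
have -> : (fun u => qf (x u) M (y u)) =
   (fun u => \sum_j (\sum_i x u i ord0 * M i j) * y u j ord0).
  by apply: funext => u; rewrite qfE.
rewrite !qfE -big_split /=.
apply: is_derive_sumR => j.
have -> : (\sum_i dx i ord0 * M i j) * y s j ord0 + (\sum_i x s i ord0 * M i j) * dy j ord0
  = (\sum_i dx i ord0 * M i j) * y s j ord0 +
    (fun u => \sum_i x u i ord0 * M i j) s * dy j ord0 by [].
apply: is_deriveMR => //.
apply: is_derive_sumR => i.
have := is_deriveMR (hx i) (is_derive_cst (M i j) s 1).
by rewrite mulr0 addr0.
Qed.

Lemma qf_cont (R : realType) n (M : 'M[R]_n) (x y : R -> 'cV[R]_n) D :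
  hasC x D -> hasC y D -> {within D, continuous (fun u => qf (x u) M (y u))}.
Proof.
move=> hx hy.
have -> : (fun u => qf (x u) M (y u)) =
   (fun u => \sum_j (\sum_i x u i ord0 * M i j) * y u j ord0).
  by apply: funext => u; rewrite qfE.
move=> u; apply: cvg_sumR => j; apply: cvgM; last exact: hy.
apply: cvg_sumR => i; apply: cvgM; last exact: cvg_cst.
exact: hx.
Qed.

Lemma t_mono (R : realType) (t : nat -> R) : (forall k, t k < t k.+1) ->
  forall i j, (i <= j)%N -> t i <= t j.
Proof.
move=> ht; apply: (@homo_leq R t (fun a b => a <= b)) => //.
  by move=> y x z; apply: le_trans.
by move=> i; apply: ltW.
Qed.

Lemma t_cover (R : realType) (t : nat -> R) : t 0%N = 0 -> (forall k, t k < t k.+1) ->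
  (forall T, exists k, T <= t k) ->
  forall s, 0 <= s -> exists k, t k <= s <= t k.+1.
Proof.
move=> t0 ht hT s s0.
have exP : exists k, s <= t k by apply: hT.
case: (ex_minnP exP) => k sk kmin.
case: k sk kmin => [|k] sk kmin.
  exists 0%N; rewrite t0 s0 /=; apply: le_trans sk _; rewrite t0 -t0; exact: ltW.
exists k; rewrite sk andbT.
case: (leP (t k) s) => // hlt.
have := kmin k (ltW hlt); by rewrite ltnn.
Qed.

Lemma piecewise_nincr (R : realType) (t : nat -> R) (F : R -> R) :
  t 0%N = 0 -> (forall k, t k < t k.+1) -> (forall T, exists k, T <= t k) ->
  {within [set s | 0 <= s], continuous F} ->
  (forall k s, t k < s < t k.+1 -> exists d, is_derive s 1 F d /\ d <= 0) ->
  forall s s', 0 <= s -> s <= s' -> F s' <= F s.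
Proof.
move=> t0 ht hT Fc hd.
have tge0 k : 0 <= t k by rewrite -t0; apply: t_mono.
have step k x y : t k <= x -> x <= y -> y <= t k.+1 -> F y <= F x.
  apply: (@ler0_derive1_nincr R F (t k) (t k.+1)).
  - move=> z; rewrite in_itv /= => /andP [h1 h2].
    by have [d [hh _]] := hd k z (introT andP (conj h1 h2)).
  - move=> z; rewrite in_itv /= => /andP [h1 h2].
    have [d [hh hle]] := hd k z (introT andP (conj h1 h2)).
    by rewrite derive1E derive_val.
  - apply: continuous_subspaceW Fc => z /=; rewrite in_itv /= => /andP [h1 _].
    exact: le_trans (tge0 k) h1.
have stepk i j : (i <= j)%N -> F (t j) <= F (t i).
  elim: j => [|j IH]; first by rewrite leqn0 => /eqP ->.
  rewrite leq_eqVlt => /orP [/eqP -> //|]; rewrite ltnS => ij.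
  apply: le_trans (IH ij); apply: step => //; exact: ltW.
move=> s s' s0 ss'.
have [k /andP [k1 k2]] := t_cover t0 ht hT s0.
have [k' /andP [k'1 k'2]] := t_cover t0 ht hT (le_trans s0 ss').
case: (ltngtP k k') => hk.
- apply: le_trans (step k' (t k') s' (lexx _) k'1 k'2) _.
  apply: le_trans (stepk k.+1 k' hk) _.
  exact: (step k s (t k.+1) k1 k2 (lexx _)).
- have : s' <= s.
    apply: le_trans k'2 _; apply: le_trans k1; exact: t_mono.
  by move=> h; have -> : s' = s by apply/eqP; rewrite eq_le h ss'.
- by subst k'; exact: (step k s s' k1 ss' k'2).
Qed.

Lemma vnormD (R : realType) n (u v : 'cV[R]_n) : vnorm (u + v) <= vnorm u + vnorm v.
Proof.
rewrite -ler_sqr ?nnegrE ?addr_ge0 ?vnorm_ge0 //.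
rewrite vnorm_sq -!qf1 qfDl !qfDr !qf1 sqrrD !vnorm_sq (dotvC v u).
have := cs_dotv u v; rewrite ler_norml => /andP [_ h]; lra.
Qed.

Lemma vnormN (R : realType) n (u : 'cV[R]_n) : vnorm (- u) = vnorm u.
Proof. by rewrite !vnormE -!qf1 qfNl qfNr opprK. Qed.

Lemma vnorm0 (R : realType) n : vnorm (0 : 'cV[R]_n) = 0.
Proof. by rewrite vnormE dotv0 sqrtr0. Qed.

Lemma vnorm_sq_le (R : realType) n (u : 'cV[R]_n) (b : R) : 0 <= b ->
  dotv u u <= b ^+ 2 -> vnorm u <= b.
Proof.
move=> b0 h; rewrite -ler_sqr ?nnegrE ?vnorm_ge0 //; by rewrite vnorm_sq.
Qed.

Lemma dotv_le (R : realType) n (u v : 'cV[R]_n) : dotv u v <= vnorm u * vnorm v.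
Proof. exact: le_trans (ler_norm _) (cs_dotv u v). Qed.

Lemma qfP_bound (R : realType) n (P : 'M[R]_n) (p : R) (x y : 'cV[R]_n) :
  0 <= p -> (forall z, vnorm (P *m z) <= p * vnorm z) ->
  qf x P y <= p * vnorm x * vnorm y.
Proof.
move=> p0 hP; rewrite qf_mul; apply: le_trans (dotv_le _ _) _.
rewrite -mulrA [p * _]mulrC -mulrA ler_wpM2l ?vnorm_ge0 //.
by rewrite mulrC hP.
Qed.

Lemma lyap_qf (R : realType) n (P M : 'M[R]_n) (x : 'cV[R]_n) : P^T = P ->
  qf x (M^T *m P + P *m M) x = 2 * qf x P (M *m x).
Proof.
move=> sP; rewrite /qf mulmxDr mulmxDl mxE.
rewrite mulmxA -trmx_mul -/(qf (M *m x) P x) (@qf_tr _ _ (M *m x) P x sP).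
rewrite /qf -!mulmxA; lra.
Qed.

Lemma lin_derive (R : realType) (c b z : R) : is_derive z 1 (fun u => c + b * u) b.
Proof.
have := is_deriveD (is_derive_cst c z 1) (is_deriveZ b (is_derive_id z 1)).
by rewrite add0r /GRing.scale /= mulr1.
Qed.

Lemma lin_cont (R : realType) (c b : R) : continuous (fun u : R => c + b * u).
Proof.
move=> u; apply: cvgD; first exact: cvg_cst.
apply: cvgM; first exact: cvg_cst. exact: cvg_id.
Qed.

Lemma dx_bound (R : realType) n (A A1 : 'M[R]_n) (a a1 : R) (y z : 'cV[R]_n) :
  (forall y, vnorm (A *m y) <= a * vnorm y) -> (forall y, vnorm (A1 *m y) <= a1 * vnorm y) ->
  vnorm (A *m y + A1 *m z) <= a * vnorm y + a1 * vnorm z.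
Proof. by move=> hA hA1; apply: le_trans (vnormD _ _) _; apply: lerD. Qed.

Lemma gronwall_est (R : realType) n (A A1 : 'M[R]_n) (x : R -> 'cV[R]_n) (a a1 tk tk1 : R) :
  0 <= a -> 0 <= a1 ->
  (forall y, vnorm (A *m y) <= a * vnorm y) -> (forall y, vnorm (A1 *m y) <= a1 * vnorm y) ->
  tk < tk1 -> (tk1 - tk) * (a + a1) <= 1/4 ->
  hasC x `[tk, tk1]%classic ->
  (forall s, tk < s < tk1 -> hasD x s (A *m x s + A1 *m x tk)) ->
  forall s, tk <= s <= tk1 -> vnorm (x s) <= 2 * vnorm (x tk).
Proof.
move=> a0 a10 hA hA1 tlt hsmall hc hd.
set L := a + a1; set xk := x tk; set dk := dotv xk xk.
have L0 : 0 <= L by rewrite addr_ge0.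
pose g u := (1 + 2 * L * tk) + (- (2 * L)) * u.
pose h u := (qf (x u) 1%:M (x u) + dk) * g u.
have gb : forall u, tk <= u <= tk1 -> 1/2 <= g u <= 1.
  move=> u /andP [u1 u2]; rewrite /g; apply/andP; split.
    have : (u - tk) * L <= 1/4.
      apply: le_trans hsmall; apply: ler_wpM2r => //; lra.
    lra.
  have : 0 <= (u - tk) * L by apply: mulr_ge0 => //; lra.
  lra.
have hD : forall z, tk < z < tk1 -> is_derive z 1 h
   ((qf (A *m x z + A1 *m xk) 1%:M (x z) + qf (x z) 1%:M (A *m x z + A1 *m xk)) * g z
     + (qf (x z) 1%:M (x z) + dk) * (- (2 * L))).
  move=> z hz; apply: is_deriveMR; last exact: lin_derive.
  have := is_deriveD (qf_derive 1%:M (hd z hz) (hd z hz)) (is_derive_cst dk z 1).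
  by rewrite addr0.
move=> s /andP [s1 s2].
have key : h s <= h tk.
  apply: (@ler0_derive1_nincr R h tk tk1) => //.
  - move=> z; rewrite in_itv /= => hz; by case: (hD z hz).
  - move=> z; rewrite in_itv /= => hz; have hDz := hD z hz; rewrite derive1E derive_val.
    have hz' : tk <= z <= tk1 by case/andP: hz => h1 h2; rewrite !ltW.
    have [g1 g2] := andP (gb z hz').
    set X := vnorm (x z); set Y := vnorm xk.
    have X0 : 0 <= X by apply: vnorm_ge0.
    have Y0 : 0 <= Y by apply: vnorm_ge0.
    have XX : qf (x z) 1%:M (x z) = X ^+ 2 by rewrite qf1 vnorm_sq.
    have YY : dk = Y ^+ 2 by rewrite /dk vnorm_sq.
    set D := qf _ 1%:M (x z) + qf (x z) 1%:M _.
    have Db : D <= 2 * X * (a * X + a1 * Y).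
      rewrite /D !qf1 (dotvC _ (x z)).
      have := dotv_le (x z) (A *m x z + A1 *m xk).
      have := dx_bound (x z) xk hA hA1.
      rewrite -/X -/Y => h1 h2.
      have : X * vnorm (A *m x z + A1 *m xk) <= X * (a * X + a1 * Y) by apply: ler_wpM2l.
      lra.
    have DL : D <= 2 * L * (X ^+ 2 + Y ^+ 2).
      apply: le_trans Db _; rewrite /L.
      have := sqr_ge0 (X - Y); nra.
    rewrite XX YY.
    have G0 : 0 <= X ^+ 2 + Y ^+ 2 by rewrite addr_ge0 ?sqr_ge0.
    have : D * g z <= 2 * L * (X ^+ 2 + Y ^+ 2) * g z by apply: ler_wpM2r => //; lra.
    have : 0 <= L * (X ^+ 2 + Y ^+ 2) by apply: mulr_ge0.
    nra.
  - move=> u; apply: cvgM.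
      apply: cvgD; last exact: cvg_cst.
      exact: (qf_cont (M:=1%:M) hc hc).
    have gc : continuous g by exact: lin_cont.
    exact: (continuous_subspaceT gc).
have [g1 g2] := andP (gb s (introT andP (conj s1 s2))).
have htk : h tk = 2 * dk.
  rewrite /h /g qf1 -/xk -/dk; lra.
move: key; rewrite htk /h qf1 -vnorm_sq /dk -vnorm_sq => key.
apply: vnorm_sq_le; first by rewrite mulr_ge0 ?vnorm_ge0.
rewrite -vnorm_sq exprMn.
have Y0 : 0 <= vnorm xk ^+ 2 by apply: sqr_ge0.
have X0 : 0 <= vnorm (x s) ^+ 2 by apply: sqr_ge0.
nra.
Qed.

Lemma err_est (R : realType) n (A A1 : 'M[R]_n) (x : R -> 'cV[R]_n) (a a1 tk tk1 : R) :
  0 <= a -> 0 <= a1 ->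
  (forall y, vnorm (A *m y) <= a * vnorm y) -> (forall y, vnorm (A1 *m y) <= a1 * vnorm y) ->
  tk < tk1 -> (tk1 - tk) * (a + a1) <= 1/4 ->
  hasC x `[tk, tk1]%classic ->
  (forall s, tk < s < tk1 -> hasD x s (A *m x s + A1 *m x tk)) ->
  forall s, tk <= s <= tk1 ->
    vnorm (x s - x tk) <= 2 * (s - tk) * (a + a1) * vnorm (x tk).
Proof.
move=> a0 a10 hA hA1 tlt hsmall hc hd.
have gron := gronwall_est a0 a10 hA hA1 tlt hsmall hc hd.
move=> s /andP [s1 s2].
have [->|sne] := eqVneq s tk.
  rewrite subrr vnorm0 subrr; lra.
have slt : tk < s by rewrite lt_neqAle eq_sym sne s1.
set w := x s - x tk; set xk := x tk.
pose f u := qf w 1%:M (x u).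
have hcw : hasC (fun _ : R => w) `[tk, s]%classic.
  by move=> i; apply: continuous_subspaceT => u; exact: cvg_cst.
have hcs : hasC x `[tk, s]%classic.
  move=> i; apply: continuous_subspaceW (hc i) => z /=; rewrite !in_itv /=.
  by case/andP => z1 z2; rewrite z1 (le_trans z2 s2).
have hder : forall z, z \in `]tk, s[ -> is_derive z 1 f ((fun u => qf w 1%:M (A *m x u + A1 *m xk)) z).
  move=> z; rewrite in_itv /= => /andP [z1 z2].
  have hz : tk < z < tk1 by rewrite z1 (lt_le_trans z2 s2).
  have hw : hasD (fun _ : R => w) z 0.
    move=> i; rewrite [(0 : 'cV[R]_n) i ord0]mxE; exact: (is_derive_cst (w i ord0) z 1).
  have := qf_derive 1%:M hw (hd z hz).
  by rewrite qf0l add0r.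
have hcont : {within `[tk, s], continuous f} by exact: (qf_cont (M:=1%:M) hcw hcs).
have [c hcin hf] := MVT slt hder hcont.
move: hcin; rewrite in_itv /= => /andP [c1 c2].
have hc' : tk <= c <= tk1 by rewrite ltW //= ltW // (lt_le_trans c2 s2).
have gc := gron c hc'.
have Ew : f s - f tk = vnorm w ^+ 2.
  by rewrite /f vnorm_sq -qf1 {3}/w qfDr qfNr.
rewrite Ew qf1 in hf.
set W := vnorm w in hf *; set Y := vnorm xk in gc *; set X := vnorm (x c) in gc.
have W0 : 0 <= W by apply: vnorm_ge0.
have Y0 : 0 <= Y by apply: vnorm_ge0.
have X0 : 0 <= X by apply: vnorm_ge0.
have h1 := dotv_le w (A *m x c + A1 *m xk).
have h2 := dx_bound (x c) xk hA hA1.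
rewrite -/W -/X -/Y in h1 h2.
have h3 : W * vnorm (A *m x c + A1 *m xk) <= W * (2 * (a + a1) * Y).
  apply: ler_wpM2l => //; apply: le_trans h2 _; nra.
have h4 : W ^+ 2 <= W * (2 * (a + a1) * Y) * (s - tk).
  rewrite hf; apply: ler_wpM2r; first lra.
  exact: le_trans h1 h3.
have st0 : 0 <= s - tk by lra.
have K0 : 0 <= 2 * (a + a1) * Y * (s - tk) by rewrite !mulr_ge0 // addr_ge0.
have : W * W <= W * (2 * (s - tk) * (a + a1) * Y).
  rewrite -expr2; apply: (le_trans h4); rewrite le_eqVlt; apply/orP; left; apply/eqP; ring.
nra.
Qed.

Lemma V_dbound (R : realType) n (A A1 P Q : 'M[R]_n) (a a1 p q Delta tau : R)
  (y z : 'cV[R]_n) :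
  0 <= a -> 0 <= a1 -> 0 <= p -> 0 < q ->
  (forall y, vnorm (A *m y) <= a * vnorm y) -> (forall y, vnorm (A1 *m y) <= a1 * vnorm y) ->
  (forall y, vnorm (P *m y) <= p * vnorm y) ->
  (forall y, q * dotv y y <= qf y Q y) -> P^T = P ->
  (A + A1)^T *m P + P *m (A + A1) = - Q ->
  Delta * (a + a1) <= 1/8 -> Delta * (p * (a + a1) ^+ 2) <= q / 16 ->
  0 <= tau -> tau <= Delta ->
  vnorm (y - z) <= 2 * tau * (a + a1) * vnorm z ->
  qf (A *m y + A1 *m z) P y + qf y P (A *m y + A1 *m z) <= - (q / 2) * dotv y y.
Proof.
move=> a0 a10 p0 q0 hA hA1 hP hQ sP hL hd1 hd2 tau0 tauD herr.
move: hd1 hd2 herr; set L := a + a1 => hd1 hd2 herr.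
have L0 : 0 <= L by rewrite addr_ge0.
have D0 : 0 <= Delta by lra.
rewrite (@qf_tr _ _ _ P y sP).
have -> : A *m y + A1 *m z = (A + A1) *m y + A1 *m (z - y).
  by rewrite mulmxDl mulmxBr [RHS]addrCA addrK [RHS]addrC.
rewrite qfDr.
have h1 : 2 * qf y P ((A + A1) *m y) = - qf y Q y by rewrite -lyap_qf // hL qfNM.
set X := vnorm y; set E := vnorm (y - z); set Y := vnorm z.
have X0 : 0 <= X by apply: vnorm_ge0.
have E0 : 0 <= E by apply: vnorm_ge0.
have Y0 : 0 <= Y by apply: vnorm_ge0.
have XX : dotv y y = X ^+ 2 by rewrite vnorm_sq.
have h2 : qf y P (A1 *m (z - y)) <= p * X * (a1 * E).
  apply: le_trans (qfP_bound y (A1 *m (z - y)) p0 hP) _.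
  rewrite -/X; apply: ler_wpM2l; first by rewrite mulr_ge0.
  by rewrite -opprB mulmxN vnormN hA1.
have YXE : Y <= X + E.
  have hz : z = y - (y - z) by rewrite opprB addrC subrK.
  rewrite /Y hz; by apply: le_trans (vnormD _ _) _; rewrite vnormN.
have Ed : E <= 2 * (Delta * L) * Y.
  apply: le_trans herr _.
  have : tau * (L * Y) <= Delta * (L * Y) by apply: ler_wpM2r => //; rewrite mulr_ge0.
  move=> h; have eY : vnorm z = Y by []; rewrite eY; lra.
have EY : E <= Y / 4.
  have : 2 * (Delta * L) * Y <= 2 * (1/8) * Y by apply: ler_wpM2r => //; lra.
  lra.
have YX : Y <= 4 / 3 * X by lra.
have EX : E <= 8 / 3 * (Delta * L) * X.
  apply: le_trans Ed _.
  have dL0 : 0 <= Delta * L by rewrite mulr_ge0.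
  have : 2 * (Delta * L) * Y <= 2 * (Delta * L) * (4 / 3 * X) by apply: ler_wpM2l => //; lra.
  lra.
have h3 : p * X * (a1 * E) <= p * X * (L * E).
  apply: ler_wpM2l; first by rewrite mulr_ge0.
  apply: ler_wpM2r => //; rewrite /L; lra.
have h4 : p * X * (L * E) <= p * X * (L * (8 / 3 * (Delta * L) * X)).
  apply: ler_wpM2l; first by rewrite mulr_ge0.
  by apply: ler_wpM2l.
have h5 : p * X * (L * (8 / 3 * (Delta * L) * X)) = 8 / 3 * (Delta * (p * L ^+ 2)) * X ^+ 2.
  by rewrite /L; ring.
have h6 : 8 / 3 * (Delta * (p * L ^+ 2)) * X ^+ 2 <= 8 / 3 * (q / 16) * X ^+ 2.
  apply: ler_wpM2r; first exact: sqr_ge0.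
  by apply: ler_wpM2l => //; lra.
have h7 := hQ y; rewrite XX in h7.
rewrite XX.
have : 0 <= q * X ^+ 2 by apply: mulr_ge0; [exact: ltW | exact: sqr_ge0].
lra.
Qed.

Lemma sol_deriv (R : realType) n (A A1 P Q : 'M[R]_n) (a a1 p q Delta : R)
  (t : nat -> R) (x : R -> 'cV[R]_n) :
  0 <= a -> 0 <= a1 -> 0 <= p -> 0 < q ->
  (forall y, vnorm (A *m y) <= a * vnorm y) -> (forall y, vnorm (A1 *m y) <= a1 * vnorm y) ->
  (forall y, vnorm (P *m y) <= p * vnorm y) ->
  (forall y, q * dotv y y <= qf y Q y) -> P^T = P ->
  (A + A1)^T *m P + P *m (A + A1) = - Q ->
  Delta * (a + a1) <= 1/8 -> Delta * (p * (a + a1) ^+ 2) <= q / 16 ->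
  t 0%N = 0 -> (forall k, t k < t k.+1) -> (forall k, t k.+1 - t k <= Delta) ->
  sd_solution A A1 t x ->
  forall k s, t k < s < t k.+1 ->
    exists d, is_derive s 1 (fun u => qf (x u) P (x u)) d /\
              d <= - (q / 2) * dotv (x s) (x s).
Proof.
move=> a0 a10 p0 q0 hA hA1 hP hQ sP hL hd1 hd2 t0 tinc tD [xc xd] k s hs.
have tk0 : 0 <= t k by rewrite -t0; apply: t_mono.
have D0 : 0 <= Delta by apply: le_trans (tD 0%N); rewrite subr_ge0 ltW.
have hc : hasC x `[t k, t k.+1]%classic.
  move=> i; apply: continuous_subspaceW (xc i) => z /=; rewrite in_itv /=.
  by case/andP => z1 _; apply: le_trans z1.
have hsmall : (t k.+1 - t k) * (a + a1) <= 1/4.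
  apply: le_trans (_ : Delta * (a + a1) <= 1/4); last lra.
  by apply: ler_wpM2r; [rewrite addr_ge0 | exact: tD].
have hdd : forall s, t k < s < t k.+1 -> hasD x s (A *m x s + A1 *m x (t k)).
  by move=> z hz i; exact: xd.
case/andP: hs => s1 s2.
have herr := err_est a0 a10 hA hA1 (tinc k) hsmall hc hdd
  (introT andP (conj (ltW s1) (ltW s2))).
exists (qf (A *m x s + A1 *m x (t k)) P (x s) + qf (x s) P (A *m x s + A1 *m x (t k))).
have H := hdd s (introT andP (conj s1 s2)).
split; first by have := qf_derive P H H.
apply: (V_dbound a0 a10 p0 q0 hA hA1 hP hQ sP hL hd1 hd2 (tau := s - t k)) => //.
  by rewrite subr_ge0 ltW.
apply: le_trans (tD k); lra.
Qed.

Lemma vnorm_dim0 (R : realType) (N : nat) (v : 'cV[R]_N) : N = 0%N -> vnorm v = 0.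
Proof.
move=> N0; rewrite /vnorm big1 ?sqrtr0 // => i _.
by exfalso; have := ltn_ord i; move: (nat_of_ord i) => j; rewrite N0.
Qed.

Lemma lt_from_sq (R : realType) (u v : R) : 0 <= u -> 0 <= v -> u ^+ 2 < v ^+ 2 -> u < v.
Proof.
move=> u0 v0 h; rewrite ltNge; apply/negP => hvu.
have : v ^+ 2 <= u ^+ 2 by rewrite ler_sqr ?nnegrE.
by rewrite leNgt h.
Qed.

Theorem proposition1 (R : realType) :
  exists c' : R, 0 < c' /\
  forall (N m : nat) (A : 'M[R]_N) (B : 'M[R]_(N, m)) (K : 'M[R]_(m, N))
         (P Q : 'M[R]_N),
    let A1 := - (B *m K) in
    posdef P -> posdef Q ->
    (A + A1)^T *m P + P *m (A + A1) = - Q ->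
    forall (Delta : R),
      Delta <= c' * smin Q / (smax P * (smax A + smax A1) ^+ 2) ->
      forall t : nat -> R, sampling t Delta -> asymp_stable A A1 t.
Proof.
exists (1 / 16); split; first lra.
move=> N m A B K P Q A1 hP hQ hL Delta hDelta t [t0 tinc tD tT].
have [N0|n0] := posnP N.
  split.
    move=> eps e0; exists 1 => // x _ _ s _; by rewrite vnorm_dim0.
  exists 1 => // x _ _.
  have -> : (fun s => vnorm (x s)) = cst 0 by apply: funext => s; rewrite vnorm_dim0.
  exact: cvg_cst.
have [a [ea a0 hA]] : exists a, [/\ smax A = a, 0 <= a & forall y, vnorm (A *m y) <= a * vnorm y].
  by have [h1 h2] := smax_prop A n0; exists (smax A).
have [a1 [ea1 a10 hA1]] : exists a1, [/\ smax A1 = a1, 0 <= a1 & forall y, vnorm (A1 *m y) <= a1 * vnorm y].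
  by have [h1 h2] := smax_prop A1 n0; exists (smax A1).
have [p [ep p0 hPb]] : exists p, [/\ smax P = p, 0 <= p & forall y, vnorm (P *m y) <= p * vnorm y].
  by have [h1 h2] := smax_prop P n0; exists (smax P).
have [q [q0 qle hq]] := smin_prop n0 hQ.
have [pl [pl0 _ hpl]] := smin_prop n0 hP.
have sP : P^T = P by case: hP.
rewrite ea ea1 ep in hDelta.
set L := a + a1 in hDelta.
have L0 : 0 <= L by rewrite addr_ge0.
have Dpos : 0 < Delta.
  by apply: lt_le_trans (tD 0%N); rewrite subr_gt0.
have qle2 : q <= 2 * (p * L).
  pose v : 'cV[R]_N := const_mx 1.
  have v0 : v != 0.
    apply/eqP => /matrixP /(_ (Ordinal n0) ord0); rewrite !mxE => /eqP.
    by rewrite oner_eq0.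
  have dv0 := dotv_gt0 v0.
  have h1 := hq v.
  have h2 : qf v Q v = - (2 * qf v P ((A + A1) *m v)).
    by rewrite -lyap_qf // hL qfNM opprK.
  have h3 : - qf v P ((A + A1) *m v) <= p * vnorm v * vnorm ((A + A1) *m v).
    rewrite -qfNr; apply: le_trans (qfP_bound _ _ p0 hPb) _.
    by rewrite vnormN.
  have h4 : vnorm ((A + A1) *m v) <= L * vnorm v.
    by rewrite mulmxDl; apply: le_trans (dx_bound v v hA hA1) _; rewrite /L mulrDl.
  have h5 : p * vnorm v * vnorm ((A + A1) *m v) <= p * vnorm v * (L * vnorm v).
    by apply: ler_wpM2l => //; rewrite mulr_ge0 ?vnorm_ge0.
  have h6 : q * dotv v v <= (2 * (p * L)) * dotv v v.
    rewrite -vnorm_sq; rewrite -vnorm_sq in h1; lra.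
  by rewrite ler_pM2r in h6.
have pL : 0 < p * L by lra.
have Lpos : 0 < L.
  rewrite lt_neqAle L0 andbT; apply/eqP => h; move: pL; by rewrite -h mulr0 ltxx.
have ppos : 0 < p.
  rewrite lt_neqAle p0 andbT; apply/eqP => h; move: pL; by rewrite -h mul0r ltxx.
have pL2 : 0 < p * L ^+ 2 by rewrite mulr_gt0 // exprn_gt0.
have hd2 : Delta * (p * L ^+ 2) <= q / 16.
  move: hDelta; rewrite ler_pdivlMr // => h; apply: le_trans h _.
  have := qle; lra.
have hd1 : Delta * L <= 1 / 8.
  have : Delta * L * (p * L) <= 1 / 8 * (p * L).
    have -> : Delta * L * (p * L) = Delta * (p * L ^+ 2) by ring.
    lra.
  by rewrite ler_pM2r.
have SD := fun x => @sol_deriv R N A A1 P Q a a1 p q Delta t x a0 a10 p0 q0 hA hA1 hPb hq sP hL hd1 hd2 t0 tinc tD.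
have Vbound : forall y : 'cV[R]_N, qf y P y <= p * dotv y y.
  by move=> y; apply: le_trans (qfP_bound y y p0 hPb) _; rewrite -mulrA -expr2 vnorm_sq.
have Vmono : forall x, sd_solution A A1 t x -> forall s s', 0 <= s -> s <= s' ->
    qf (x s') P (x s') <= qf (x s) P (x s).
  move=> x sol; apply: (piecewise_nincr t0 tinc tT).
    by case: sol => xc _; exact: (qf_cont (M:=P) xc xc).
  move=> k s hs; have [d [hd dle]] := SD x sol k s hs; exists d; split => //.
  apply: le_trans dle _; rewrite mulNr oppr_le0; apply: mulr_ge0; last exact: dotv_ge0.
  lra.
split.
  move=> eps e0.
  have r0 : 0 < pl / p by rewrite divr_gt0.
  exists (eps * Num.sqrt (pl / p)); first by rewrite mulr_gt0 // sqrtr_gt0.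
  move=> x sol hx0 s s0.
  have h1 := Vmono x sol 0 s (lexx 0) s0.
  have h2 := hpl (x s).
  have h3 := Vbound (x 0).
  have h4 : dotv (x 0) (x 0) < eps ^+ 2 * (pl / p).
    rewrite -vnorm_sq -(sqr_sqrtr (ltW r0)) -exprMn.
    by rewrite ltr_pXn2r ?nnegrE ?vnorm_ge0 // mulr_ge0 ?sqrtr_ge0 // ltW.
  apply: lt_from_sq; [exact: vnorm_ge0 | exact: ltW |].
  rewrite vnorm_sq.
  have h5 : p * dotv (x 0) (x 0) < eps ^+ 2 * pl.
    have -> : eps ^+ 2 * pl = p * (eps ^+ 2 * (pl / p)) by field; rewrite gt_eqF.
    by rewrite ltr_pM2l.
  have h6 : pl * dotv (x s) (x s) < pl * eps ^+ 2 by lra.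
  by rewrite ltr_pM2l in h6.
exists 1 => // x sol _.
apply/cvgrPdist_lt => e e0.
set eta := pl * e ^+ 2.
have eta0 : 0 < eta by rewrite mulr_gt0 // exprn_gt0.
have V0ge : 0 <= qf (x 0) P (x 0).
  by apply: le_trans (hpl (x 0)); rewrite mulr_ge0 ?dotv_ge0 // ltW.
have [S [S0 VS]] : exists S, 0 <= S /\ qf (x S) P (x S) < eta.
  case: (pselect (exists S, 0 <= S /\ qf (x S) P (x S) < eta)) => // hno.
  exfalso.
  have hge : forall S, 0 <= S -> eta <= qf (x S) P (x S).
    move=> S S0; rewrite leNgt; apply/negP => hlt; apply: hno; by exists S; split.
  set b := q / (2 * p) * eta.
  have b0 : 0 < b by rewrite /b mulr_gt0 // divr_gt0 // mulr_gt0.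
  pose W u := qf (x u) P (x u) + (0 + b * u).
  have Wmono : forall s s', 0 <= s -> s <= s' -> W s' <= W s.
    apply: (piecewise_nincr t0 tinc tT).
      move=> u; apply: cvgD.
        by case: sol => xc _; exact: (qf_cont (M:=P) xc xc).
      have gc : continuous (fun u : R => 0 + b * u) by exact: lin_cont.
      exact: (continuous_subspaceT gc).
    move=> k s hs; have [d [hd dle]] := SD x sol k s hs.
    exists (d + b); split; first exact: is_deriveD hd (lin_derive 0 b s).
    have tk0 : 0 <= t k by rewrite -t0; apply: t_mono.
    have s0 : 0 <= s by case/andP: hs => h _; apply: le_trans (ltW h).
    have h1 := hge s s0.
    have h2 := Vbound (x s).
    have h3 : b <= q / 2 * dotv (x s) (x s).
      have -> : q / 2 = q / (2 * p) * p by field; rewrite gt_eqF.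
      rewrite -mulrA /b; apply: ler_wpM2l; first by rewrite ltW // divr_gt0 // mulr_gt0.
      exact: le_trans h1 h2.
    lra.
  pose S := qf (x 0) P (x 0) / b + 1.
  have S0 : 0 <= S by rewrite /S addr_ge0 // divr_ge0 // ltW.
  have := Wmono 0 S (lexx 0) S0.
  have := hge S S0.
  rewrite /W mulr0 !add0r addr0.
  have -> : b * S = qf (x 0) P (x 0) + b by rewrite /S mulrDr mulr1; congr (_ + _); field; rewrite gt_eqF.
  lra.
exists S; split; first exact: num_real.
move=> s hs.
rewrite sub0r normrN ger0_norm ?vnorm_ge0 //.
have h1 := Vmono x sol S s S0 (ltW hs).
have h2 := hpl (x s).
apply: lt_from_sq; [exact: vnorm_ge0 | exact: ltW |].
rewrite vnorm_sq.
have h6 : pl * dotv (x s) (x s) < pl * e ^+ 2 by rewrite /eta in VS; lra.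
by rewrite ltr_pM2l in h6.
Qed.
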